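(* Let $\varphi$ be a $\mathrm{THT}_1$ formula having some equilibrium model. Then $\varphi$ has an equilibrium model which is strongly ultimately periodic and of size at most $2+2^{|\varphi|}$.
   Context: Fix a finite set $P$ of atomic propositions. THT formulas over $P$ are given by $\varphi ::= p \mid \bot \mid \varphi\vee\varphi \mid \varphi\wedge\varphi \mid \varphi\rightarrow\varphi \mid \mathsf{X}\varphi \mid \varphi\,\mathsf{U}\,\varphi \mid \varphi\,\mathsf{R}\,\varphi$, with $\neg\varphi:=\varphi\rightarrow\bot$. The modalities $\mathsf F\varphi:=\top\,\mathsf U\,\varphi$ and $\mathsf G\varphi:=\bot\,\mathsf R\,\varphi$ are also allowed. A THT interpretation is a pair $M=(H,T)$ of infinite words over $2^P$ with $H(i)\subseteq T(i)$ for all $i$; write $M(i)=(H(i),T(i))$; $M$ is total if $H=T$. Satisfaction $M,i\models\varphi$ is defined by: - $M,i\not\models\bot$; - $M,i\models p$ iff $p\in H(i)$; - $\vee$ and $\wedge$ are interpreted as usual; - $M,i\models\varphi\rightarrow\psi$ iff for both $H'\in\{H,T\}$, either $(H',T),i\not\models\varphi$ or $(H',T),i\models\psi$; - $\mathsf X,\mathsf U,\mathsf R$ have their usual LTL clauses evaluated in $M$. $M\models\varphi$ means $M,0\models\varphi$. An equilibrium model of $\varphi$ is a total $(T,T)\models\varphi$ such that $(H,T)\not\models\varphi$ for every $H$ with $H(i)\subseteq T(i)$ for all $i$ and $H\ne T$. $\mathrm{THT}_1$ is the set of THT formulas in which no temporal modality ($\mathsf X,\mathsf U,\mathsf R,\mathsf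 F,\mathsf G$) occurs within the scope of another. $|\varphi|$ is the number of distinct subformulas of $\varphi$. An interpretation $M$ is strongly ultimately periodic if there is $i\ge 0$ with $M(k)=M(i)$ for all $k\ge i$. Its size is $j+1$, where $j$ is the smallest such $i$. *)

(* Defs.v *)
From HB Require Import structures.
From mathcomp Require Import all_boot.
Set Implicit Arguments.
Unset Strict Implicit.
Unset Printing Implicit Defensive.

Section THT.
Variable P : finType.

(* THT formulas; F and G are included as primitive modalities since the
   paper allows them in the syntax (they matter for |phi|). *)
Inductive form : Type :=
  | Atom of P
  | Bot
  | Or of form & form
  | And of form & form
  | Imp of form & form
  | Next of form
  | Until of form & form
  | Release of form & form
  | Fin of form
  | Glob of form.

Definition Neg (f : form) := Imp f Bot.
Definition Top := Imp Bot Bot.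

Fixpoint form_eqb (a b : form) : bool :=
  match a, b with
  | Atom p, Atom q => p == q
  | Bot, Bot => true
  | Or a1 a2, Or b1 b2 => form_eqb a1 b1 && form_eqb a2 b2
  | And a1 a2, And b1 b2 => form_eqb a1 b1 && form_eqb a2 b2
  | Imp a1 a2, Imp b1 b2 => form_eqb a1 b1 && form_eqb a2 b2
  | Next a1, Next b1 => form_eqb a1 b1
  | Until a1 a2, Until b1 b2 => form_eqb a1 b1 && form_eqb a2 b2
  | Release a1 a2, Release b1 b2 => form_eqb a1 b1 && form_eqb a2 b2
  | Fin a1, Fin b1 => form_eqb a1 b1
  | Glob a1, Glob b1 => form_eqb a1 b1
  | _, _ => false
  end.

Lemma form_eqbP : Equality.axiom form_eqb.
Proof.
elim=> [p||a1 IH1 a2 IH2|a1 IH1 a2 IH2|a1 IH1 a2 IH2|a1 IH1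
        |a1 IH1 a2 IH2|a1 IH1 a2 IH2|a1 IH1|a1 IH1] [q||b1 b2|b1 b2|b1 b2|b1
        |b1 b2|b1 b2|b1|b1] /=; try by constructor.
- by apply: (iffP eqP) => [->|[]].
all: try (by case: (IH1 b1) => [->|h]; constructor => // [[]]).
all: by case: (IH1 b1) => [->|h]; [case: (IH2 b2) => [->|h2]|];
        constructor => // [[]].
Qed.

HB.instance Definition _ := hasDecEq.Build form form_eqbP.

Fixpoint subforms (f : form) : seq form :=
  f :: match f with
       | Atom _ | Bot => [::]
       | Or a b | And a b | Imp a b | Until a b | Release a b =>
           subforms a ++ subforms b
       | Next a | Fin a | Glob a => subforms a
       end.

Definition fsize (f : form) : nat := size (undup (subforms f)).

Fixpoint tdepth (f : form) : nat :=
  match f with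
  | Atom _ | Bot => 0
  | Or a b | And a b | Imp a b => maxn (tdepth a) (tdepth b)
  | Until a b | Release a b => (maxn (tdepth a) (tdepth b)).+1
  | Next a | Fin a | Glob a => (tdepth a).+1
  end.

Definition THT1 (f : form) : Prop := tdepth f <= 1.

Definition word := nat -> {set P}.

(* THT satisfaction (H,T),i |= f ; assumes H i \subset T i *)
Fixpoint sat (H T : word) (i : nat) (f : form) {struct f} : Prop :=
  match f with
  | Atom p => p \in H i
  | Bot => False
  | Or a b => sat H T i a \/ sat H T i b
  | And a b => sat H T i a /\ sat H T i b
  | Imp a b => (sat H T i a -> sat H T i b) /\ (sat T T i a -> sat T T i b)
  | Next a => sat H T i.+1 a
  | Until a b => exists k, i <= k /\ sat H T k b /\
                   forall j, i <= j -> j < k -> sat H T j a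
  | Release a b => forall k, i <= k -> sat H T k b \/
                   exists j, [/\ i <= j, j < k & sat H T j a]
  (* F a := Top U a ;  G a := Bot R a *)
  | Fin a => exists k, i <= k /\ sat H T k a
  | Glob a => forall k, i <= k -> sat H T k a
  end.

Definition subword (H T : word) : Prop := forall i, H i \subset T i.

Definition equilibrium (f : form) (T : word) : Prop :=
  sat T T 0 f /\
  forall H : word, subword H T -> (exists i, H i != T i) -> ~ sat H T 0 f.

Definition periodic_from (H T : word) (j : nat) : Prop :=
  forall k, j <= k -> (H k, T k) = (H j, T j).

Definition strongly_ult_periodic (H T : word) : Prop :=
  exists j, periodic_from H T j.

(* M is strongly ultimately periodic of size at most n: the smallest j with
   periodic_from H T j satisfies j+1 <= n; equivalently some such j does. *)
Definition sup_size_le (H T : word) (n : nat) : Prop :=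
  exists j, periodic_from H T j /\ j.+1 <= n.

End THT.

(* Main.v *)
Require Import Defs.
From Stdlib Require Import Classical.
From mathcomp Require Import all_boot zify.
Set Implicit Arguments. Unset Strict Implicit. Unset Printing Implicit Defensive.



Fixpoint ain (P : finType) (A : {set P}) (f : form P) : bool :=
  match f with
  | Atom p => p \in A
  | Bot => true
  | Or a b | And a b | Imp a b | Until a b | Release a b => ain A a && ain A b
  | Next a | Fin a | Glob a => ain A a
  end.

Lemma local_eq (P : finType) (A : {set P}) (f : form P) :
  tdepth f = 0 -> ain A f ->
  forall (H1 T1 H2 T2 : word P) j j', H1 j :&: A = H2 j' :&: A -> T1 j :&: A = T2 j' :&: A ->
  (sat H1 T1 j f <-> sat H2 T2 j' f).
Proof.
elim: f => [p||a IHa b IHb|a IHa b IHb|a IHa b IHb|a IHa|a IHa b IHb|a IHa b IHb|a IHa|a IHa] //= Hd Hain H1 T1 H2 T2 j j' EH ET.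
- have: (p \in H1 j :&: A) = (p \in H2 j' :&: A) by rewrite EH.
  by rewrite !inE Hain !andbT => ->.
- have ha : tdepth a = 0 by lia. have hb : tdepth b = 0 by lia.
  move/andP: Hain => [Ha Hb].
  have := IHa ha Ha _ _ _ _ _ _ EH ET; have := IHb hb Hb _ _ _ _ _ _ EH ET; tauto.
- have ha : tdepth a = 0 by lia. have hb : tdepth b = 0 by lia.
  move/andP: Hain => [Ha Hb].
  have := IHa ha Ha _ _ _ _ _ _ EH ET; have := IHb hb Hb _ _ _ _ _ _ EH ET; tauto.
- have ha : tdepth a = 0 by lia. have hb : tdepth b = 0 by lia.
  move/andP: Hain => [Ha Hb].
  have := IHa ha Ha _ _ _ _ _ _ EH ET; have := IHb hb Hb _ _ _ _ _ _ EH ET.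
  have := IHa ha Ha _ _ _ _ _ _ ET ET; have := IHb hb Hb _ _ _ _ _ _ ET ET; tauto.
Qed.

Definition initg (g : nat -> nat) := forall k i, i <= g k -> exists2 j, j <= k & g j = i.
Definition surjg (g : nat -> nat) := forall m, exists k, g k = m.

Lemma least_pre g (Ig : initg g) (Sg : surjg g) m :
  exists k, g k = m /\ forall j, j < k -> g j < m.
Proof.
have ex : exists k, g k == m by have [k gk] := Sg m; exists k; rewrite gk.
case: (ex_minnP ex) => k /eqP gk minK; exists k; split => // j jk.
case: (ltngtP (g j) m) => // [gt|eq].
- have [j' j'j gj'] := Ig j m (ltnW gt).
  have := minK j'; rewrite gj' eqxx => /(_ isT); lia.
- have := minK j; rewrite eq eqxx => /(_ isT); lia.
Qed.

Lemma temp_eq (P : finType) (A : {set P}) g (Ig : initg g) (Sg : surjg g) (g1 : g 1 = 1)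
  (f : form P) :
  tdepth f <= 1 -> ain A f ->
  forall (H1 T1 H2 T2 : word P), (forall j, H1 j :&: A = H2 (g j) :&: A) ->
    (forall j, T1 j :&: A = T2 (g j) :&: A) ->
  (sat H1 T1 0 f <-> sat H2 T2 0 f).
Proof.
have g0 : g 0 = 0 by have [j] := Ig 0 0 (leq0n _); rewrite leqn0 => /eqP ->.
elim: f => [p||a IHa b IHb|a IHa b IHb|a IHa b IHb|a IHa|a IHa b IHb|a IHa b IHb|a IHa|a IHa] /= Hd Hain H1 T1 H2 T2 EH ET.
- have := local_eq (f := Atom p) erefl Hain (EH 0) (ET 0); rewrite g0 //.
- by [].
- have ha : tdepth a <= 1 by lia. have hb : tdepth b <= 1 by lia.
  move/andP: Hain => [Ha Hb].
  have := IHa ha Ha _ _ _ _ EH ET; have := IHb hb Hb _ _ _ _ EH ET; tauto.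
- have ha : tdepth a <= 1 by lia. have hb : tdepth b <= 1 by lia.
  move/andP: Hain => [Ha Hb].
  have := IHa ha Ha _ _ _ _ EH ET; have := IHb hb Hb _ _ _ _ EH ET; tauto.
- have ha : tdepth a <= 1 by lia. have hb : tdepth b <= 1 by lia.
  move/andP: Hain => [Ha Hb].
  have := IHa ha Ha _ _ _ _ EH ET; have := IHb hb Hb _ _ _ _ EH ET.
  have := IHa ha Ha _ _ _ _ ET ET; have := IHb hb Hb _ _ _ _ ET ET; tauto.
- have ha : tdepth a = 0 by lia.
  have := local_eq ha Hain (EH 1) (ET 1); rewrite g1 //.
- have ha : tdepth a = 0 by lia. have hb : tdepth b = 0 by lia.
  move/andP: Hain => [Ha Hb].
  have La k := local_eq ha Ha (EH k) (ET k).
  have Lb k := local_eq hb Hb (EH k) (ET k).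
  split.
  + move=> [k [_ [kb ka]]]; exists (g k); split => //; split; first by apply/Lb.
    move=> i _ ik; have [j jk gj] := Ig k i (ltnW ik).
    rewrite -gj; apply/La; apply: ka => //.
    by move: jk; rewrite leq_eqVlt => /orP [/eqP E|//]; move: ik; rewrite -gj E ltnn.
  + move=> [m [_ [mb ma]]]; have [k [gk kmin]] := least_pre Ig Sg m.
    exists k; split => //; split; first by apply/Lb; rewrite gk.
    by move=> j _ jk; apply/La; apply: ma => //; apply: kmin.
- have ha : tdepth a = 0 by lia. have hb : tdepth b = 0 by lia.
  move/andP: Hain => [Ha Hb].
  have La k := local_eq ha Ha (EH k) (ET k).
  have Lb k := local_eq hb Hb (EH k) (ET k).
  split.
  + move=> R m _; have [k [gk kmin]] := least_pre Ig Sg m.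
    case: (R k (leq0n _)) => [kb|[j [_ jk ja]]].
    * by left; rewrite -gk; apply/Lb.
    * by right; exists (g j); split => //; [apply: kmin | apply/La].
  + move=> R k _; case: (R (g k) (leq0n _)) => [kb|[i [_ ik ia]]].
    * by left; apply/Lb.
    * right; have [j jk gj] := Ig k i (ltnW ik).
      exists j; split => //; last by apply/La; rewrite gj.
      by move: jk; rewrite leq_eqVlt => /orP [/eqP E|//]; move: ik; rewrite -gj E ltnn.
- have ha : tdepth a = 0 by lia.
  have La k := local_eq ha Hain (EH k) (ET k).
  split.
  + by move=> [k [_ ka]]; exists (g k); split => //; apply/La.
  + by move=> [m [_ ma]]; have [k gk] := Sg m; exists k; split => //; apply/La; rewrite gk.
- have ha : tdepth a = 0 by lia.
  have La k := local_eq ha Hain (EH k) (ET k).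
  split.
  + by move=> G m _; have [k gk] := Sg m; rewrite -gk; apply/La; apply: G.
  + by move=> G k _; apply/La; apply: G.
Qed.



Definition rr (K : eqType) (cls : nat -> K) (j : nat) : nat :=
  if j <= 1 then j else (find (fun i => cls i == cls j) (iota 2 (j - 2))).+2.

Lemma rr_le (K : eqType) (cls : nat -> K) j : rr cls j <= j.
Proof.
rewrite /rr; case: ifP => // j1.
have := find_size (fun i => cls i == cls j) (iota 2 (j - 2)); rewrite size_iota; lia.
Qed.

Lemma rr_cls (K : eqType) (cls : nat -> K) j : cls (rr cls j) = cls j.
Proof.
rewrite /rr; case: ifP => // j1.
case: (boolP (has (fun i => cls i == cls j) (iota 2 (j - 2)))) => h.
- have hf := h; rewrite has_find size_iota in hf.
  have := nth_find 0 h; rewrite nth_iota //.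
  by rewrite add2n => /eqP.
- move: h; rewrite has_find -leqNgt => h.
  have := find_size (fun i => cls i == cls j) (iota 2 (j - 2)); rewrite size_iota => h2.
  have -> : (find (fun i => cls i == cls j) (iota 2 (j - 2))).+2 = j.
    move: h; rewrite size_iota; lia.
  by [].
Qed.

Lemma rr_ge2 (K : eqType) (cls : nat -> K) j : 2 <= j -> 2 <= rr cls j.
Proof. by rewrite /rr; case: ifP => //; lia. Qed.

Lemma rr_min (K : eqType) (cls : nat -> K) i j :
  2 <= i -> i < j -> cls i = cls j -> rr cls j <= i.
Proof.
move=> i2 ij ec; rewrite /rr; case: ifP => j1; first lia.
rewrite leqNgt; apply/negP => h.
have h' : i - 2 < find (fun i => cls i == cls j) (iota 2 (j - 2)) by lia.
have := before_find 0 h'; rewrite nth_iota; last lia.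
have -> : 2 + (i - 2) = i by lia.
by rewrite ec eqxx.
Qed.

Lemma rr_before (K : eqType) (cls : nat -> K) i j :
  2 <= i -> i < rr cls j -> cls i != cls j.
Proof.
move=> i2; rewrite /rr; case: ifP => j1 h; first lia.
have h' : i - 2 < find (fun i => cls i == cls j) (iota 2 (j - 2)) by lia.
have := before_find 0 h'.
have hs := find_size (fun i => cls i == cls j) (iota 2 (j - 2)); rewrite size_iota in hs.
rewrite nth_iota; last lia.
have -> : 2 + (i - 2) = i by lia.
by move=> ->.
Qed.

Lemma rr_idem (K : eqType) (cls : nat -> K) j : rr cls (rr cls j) = rr cls j.
Proof.
case: (leqP j 1) => j1.
  by rewrite /rr j1 j1.
have k2 := rr_ge2 cls j1.
have := rr_le cls (rr cls j); rewrite leq_eqVlt => /orP [/eqP //|lt].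
have := rr_before (rr_ge2 cls k2) lt; rewrite !rr_cls eqxx //.
Qed.

Lemma rr_inj (K : eqType) (cls : nat -> K) j k :
  2 <= j -> 2 <= k -> rr cls j = j -> rr cls k = k -> cls j = cls k -> j = k.
Proof.
move=> j2 k2 rj rk e.
case: (ltngtP j k) => // h.
- have := rr_min j2 h e; lia.
- have := rr_min k2 h (esym e); lia.
Qed.

Lemma unif (K : finType) (Pr : K -> nat -> Prop) :
  (forall s, exists N, forall j, N <= j -> Pr s j) -> exists N, forall s j, N <= j -> Pr s j.
Proof.
move=> H.
suff: forall L : seq K, exists N, forall s j, s \in L -> N <= j -> Pr s j.
  by move=> /(_ (enum K)) [N HN]; exists N => s j; apply: HN; rewrite mem_enum.
elim=> [|s L [N HN]]; first by exists 0.
have [M HM] := H s.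
exists (maxn N M) => s' j; rewrite inE => /orP [/eqP ->|sL] nj.
- apply: HM; lia.
- apply: HN => //; lia.
Qed.



Definition rank (D : pred nat) j := count D (iota 0 j).

Lemma rankS (D : pred nat) j : rank D j.+1 = rank D j + D j.
Proof. by rewrite /rank -addn1 iotaD count_cat /= addn0. Qed.

Lemma rank_mono (D : pred nat) m n : m <= n -> rank D m <= rank D n.
Proof. by move=> mn; rewrite /rank -(subnKC mn) iotaD count_cat leq_addr. Qed.

Lemma rank_hit (D : pred nat) n i : i < rank D n -> exists j, [/\ j < n, D j & rank D j = i].
Proof.
elim: n => [|n IH]; first by rewrite /rank.
rewrite rankS; case: (ltnP i (rank D n)) => [lt _|ge lt].
- by have [j [jn Dj rj]] := IH lt; exists j; split => //; lia.
- case Dn: (D n) lt => /=; last lia.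
  move=> lt; exists n; split => //; lia.
Qed.

Lemma nth_rank (D : pred nat) x0 q j : j < q -> D j ->
  nth x0 (filter D (iota 0 q)) (rank D j) = j.
Proof.
move=> jq Dj; rewrite -(subnKC (ltnW jq)) iotaD filter_cat nth_cat size_filter ltnn subnn.
have -> : q - j = (q - j).-1.+1 by lia.
by rewrite /= add0n Dj.
Qed.

Section G.
Variables (K : eqType) (cls : nat -> K) (q : nat).
Hypothesis q2 : 2 <= q.
Hypothesis HQ : forall j, 2 <= j -> rr cls j = j -> j < q.
Hypothesis Hinf : forall n, exists j, n <= j /\ cls j = cls q.

Definition DD : pred nat := fun j => (rr cls j == j) || (q <= j) && (cls j == cls q).
Definition dd j := if DD j then j else rr cls j.
Definition gg j := rank DD (dd j).

Lemma DD_dd j : DD (dd j).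
Proof. by rewrite /dd; case: ifP => // _; rewrite /DD rr_idem eqxx. Qed.
Lemma dd_le j : dd j <= j.
Proof. by rewrite /dd; case: ifP => // _; apply: rr_le. Qed.
Lemma dd_cls j : cls (dd j) = cls j.
Proof. by rewrite /dd; case: ifP => // _; apply: rr_cls. Qed.
Lemma gg_D j : DD j -> gg j = rank DD j.
Proof. by rewrite /gg /dd => ->. Qed.

Lemma gg_init : initg gg.
Proof.
move=> k i; rewrite {1}/gg leq_eqVlt => /orP [/eqP ->|lt].
- by exists (dd k); [apply: dd_le | rewrite gg_D ?DD_dd].
- have [j [jd Dj rj]] := rank_hit lt.
  exists j; last by rewrite gg_D.
  have := dd_le k; lia.
Qed.

Lemma DD_unbounded n : exists j, n <= j /\ DD j.
Proof.
have [j [nj cj]] := Hinf (maxn n q); exists j; split; first lia.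
by rewrite /DD cj eqxx andbT; apply/orP; right; lia.
Qed.

Lemma rank_unbounded m : exists n, m < rank DD n.
Proof.
elim: m => [|m [n IH]].
- have [j [_ Dj]] := DD_unbounded 0; exists j.+1; rewrite rankS Dj; lia.
- have [j [nj Dj]] := DD_unbounded n; exists j.+1; rewrite rankS Dj.
  have := rank_mono DD nj; lia.
Qed.

Lemma gg_surj : surjg gg.
Proof.
move=> m; have [n lt] := rank_unbounded m.
have [j [_ Dj rj]] := rank_hit lt; by exists j; rewrite gg_D.
Qed.

Lemma gg0 : gg 0 = 0.
Proof. by rewrite gg_D. Qed.
Lemma gg1 : gg 1 = 1.
Proof. by rewrite gg_D // /rank /= /DD /rr /=. Qed.

Definition LL := filter DD (iota 0 q).
Definition ff i := nth q LL i.

Lemma ff_cls j : cls (ff (gg j)) = cls j.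
Proof.
rewrite -(dd_cls j) /ff /gg /LL; have := DD_dd j; set e := dd j => De.
case: (ltnP e q) => eq.
- by rewrite nth_rank.
- rewrite nth_default; last by rewrite size_filter; apply: rank_mono.
  move: De; rewrite /DD => /orP [/eqP re|/andP [_ /eqP ->] //].
  have := HQ; move=> /(_ e); rewrite re; lia.
Qed.

Lemma ff_tail k : size LL <= k -> ff k = q.
Proof. by move=> h; rewrite /ff nth_default. Qed.

Lemma size_LL (S : seq K) : (forall j, cls j \in S) -> size LL <= 2 + size S.
Proof.
move=> inS; rewrite /LL size_filter.
have -> : q = 2 + (q - 2) by lia.
rewrite iotaD count_cat add0n.
have -> : count DD (iota 0 2) = 2 by rewrite /= /DD /rr.
rewrite leq_add2l.
have -> : count DD (iota 2 (q - 2)) = count (fun j => rr cls j == j) (iota 2 (q - 2)).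
  apply: eq_in_count => j; rewrite mem_iota => /andP [j2 jq].
  rewrite /DD; have -> : (q <= j) = false by apply/negbTE; rewrite -ltnNge; lia.
  by rewrite andFb orbF.
rewrite -size_filter -(size_map cls); apply: uniq_leq_size.
- rewrite map_inj_in_uniq ?filter_uniq ?iota_uniq //.
  move=> a b; rewrite !mem_filter !mem_iota => /andP [/eqP ra /andP [a2 _]] /andP [/eqP rb /andP [b2 _]].
  exact: rr_inj.
- by move=> x /mapP [j _ ->].
Qed.
End G.



Lemma ain_sub (P : finType) (A : {set P}) (f : form P) :
  (forall p, Atom p \in subforms f -> p \in A) -> ain A f.
Proof.
elim: f => [p||a IHa b IHb|a IHa b IHb|a IHa b IHb|a IHa|a IHa b IHb|a IHa b IHb|a IHa|a IHa] //= H;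
  first (by apply: H; rewrite inE eqxx);
  try (by apply: IHa => p hp; apply: H; rewrite inE hp orbT);
  by apply/andP; split; [apply: IHa | apply: IHb] => p hp; apply: H; rewrite inE mem_cat hp ?orbT.
Qed.

Lemma atoms_card (P : finType) (phi : form P) :
  (forall p, phi <> Atom p) ->
  #|[set p | Atom p \in subforms phi]|.+1 <= fsize phi.
Proof.
move=> nA; rewrite /fsize cardE.
set A := [set p | Atom p \in subforms phi].
have -> : (size (enum A)).+1 = size (phi :: map (@Atom P) (enum A)) by rewrite /= size_map.
apply: uniq_leq_size.
- rewrite /= map_inj_uniq ?enum_uniq ?andbT; last by move=> a b [].
  by apply/mapP => [[p _ E]]; apply: (nA p).
- move=> x; rewrite inE mem_undup => /orP [/eqP ->|/mapP [p]].
  + by clear A; case: phi {nA} => *; rewrite inE eqxx.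
  + by rewrite mem_enum inE => h ->.
Qed.

Lemma atom_case (P : finType) (p : P) (T : word P) :
  equilibrium (Atom p) T ->
  exists T' : word P, equilibrium (Atom p) T' /\
    strongly_ult_periodic T' T' /\ sup_size_le T' T' (2 + 2 ^ fsize (Atom p)).
Proof.
move=> [Hs Hm].
pose T' : word P := fun i => if i == 0 then T 0 else set0.
have per : periodic_from T' T' 1 by move=> k k1; rewrite /T'; have -> : (k == 0) = false by lia.
exists T'; split; last by split; [exists 1 | exists 1; split => //; rewrite expn_gt0].
split => //= H sub [i ni] Hp.
have i0 : i = 0.
  apply/eqP; apply: contraNT ni => /negbTE i0; apply/eqP/setP => x.
  have := sub i; rewrite /T' i0 subset0 => /eqP ->; by rewrite inE.
subst i.
apply: (Hm (fun j => if j == 0 then H 0 else T j)).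
- by move=> j; case: ifP => [/eqP ->|_]; [apply: sub | apply: subxx].
- by exists 0.
- by [].
Qed.

Theorem mainTheorem4 (P : finType) (phi : form P) :
  THT1 phi ->
  (exists T : word P, equilibrium phi T) ->
  exists T : word P, equilibrium phi T /\
    strongly_ult_periodic T T /\ sup_size_le T T (2 + 2 ^ fsize phi).
Proof.
move=> Ht [T [Hsat Hmin]].
case: (classic (exists p, phi = Atom p)) => [[p Ep]|nA].
  by subst phi; apply: (atom_case (conj Hsat Hmin)).
have nA' : forall p, phi <> Atom p by move=> p E; apply: nA; exists p.
set A := [set p | Atom p \in subforms phi].
have HA := atoms_card nA'; rewrite -/A in HA.
have HainA : ain A phi by apply: ain_sub => p hp; rewrite inE.
pose cls j := T j :&: A.
have [Q HQ] : exists Q, forall j, 2 <= j -> rr cls j = j -> j < Q.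
  have HU : forall s, exists N, forall j, N <= j -> 2 <= j -> rr cls j = j -> cls j <> s.
    move=> s.
    case: (classic (exists j0, [/\ 2 <= j0, rr cls j0 = j0 & cls j0 = s])) => [[j0 [j02 r0 c0]]|no].
    - exists j0.+1 => j j0j j2 rj cj; have := rr_inj j2 j02 rj r0; rewrite cj c0 => /(_ erefl); lia.
    - by exists 0 => j _ j2 rj cj; apply: no; exists j.
  have [N HN] := unif HU.
  exists N => j j2 rj; rewrite ltnNge; apply/negP => Nj.
  by apply: (HN (cls j) j Nj j2 rj).
have [c Hc] : exists c, forall n, exists j, n <= j /\ cls j = c.
  apply: NNPP => H.
  have HU : forall s, exists N, forall j, N <= j -> cls j <> s.
    move=> s; apply: NNPP => H2; apply: H; exists s => n; apply: NNPP => H3; apply: H2; exists n => j nj cj.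
    by apply: H3; exists j.
  have [N HN] := unif HU.
  by apply: (HN (cls N) N).
have [q [qge cq]] := Hc (maxn Q 2).
have q2 : 2 <= q by lia.
have HQ' : forall j, 2 <= j -> rr cls j = j -> j < q by move=> j j2 rj; have := HQ j j2 rj; lia.
have Hinf : forall n, exists j, n <= j /\ cls j = cls q by move=> n; rewrite cq; apply: Hc.
set g := gg cls q.
have Ig : initg g := gg_init q2.
have Sg : surjg g := gg_surj q2 Hinf.
have g1 : g 1 = 1 := gg1 cls q.
pose T' : word P := fun i => T (ff cls q i).
have Hff : forall j, T j :&: A = T' (g j) :&: A by move=> j; exact: (esym (ff_cls q2 HQ' j)).
exists T'; split; [split|split].
- by apply/(temp_eq Ig Sg g1 Ht HainA Hff Hff).
- move=> H' sub' [i ni] Hs'.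
  have [e eT eH] : exists2 e, e \in T' i & e \notin H' i.
    have : H' i \proper T' i by rewrite properEneq ni sub'.
    by case/properP.
  have [jA gjA] := Sg i.
  pose j0 := if e \in A then jA else ff cls q i.
  have ej0 : e \in T j0.
    rewrite /j0; case: ifP => eA //.
    have : e \in T' (g jA) :&: A by rewrite gjA inE eT eA.
    by rewrite -Hff inE => /andP [].
  have gj0 : e \in A -> g j0 = i by rewrite /j0 => ->.
  pose H j := ((H' (g j) :&: A) :|: (T j :\: A)) :\: (if j == j0 then [set e] else set0).
  have HH : forall j, H j :&: A = H' (g j) :&: A.
    move=> j; apply/setP => x; rewrite /H !(in_setI, in_setU, in_setD).
    case xA: (x \in A); rewrite ?andbF ?andbT ?andTb ?orbF ?andFb //=.
    case: (j =P j0) => [Ej|_]; rewrite ?in_set0 ?andTb //.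
    rewrite in_set1; case: (x =P e) => [E|_] //=.
    by subst; rewrite gj0 // (negbTE eH).
  apply: (Hmin H).
  + move=> j; apply/subsetP => x; rewrite /H !(in_setI, in_setU, in_setD).
    move=> /andP [_ /orP [/andP [xH xA]|/andP [_ ->]]] //.
    have := sub' (g j) => /subsetP /(_ x xH) xT.
    have : x \in T' (g j) :&: A by rewrite inE xT xA.
    by rewrite -Hff inE => /andP [].
  + exists j0; apply/eqP => E; move: eH.
    have : e \notin H j0 by rewrite /H eqxx !inE eqxx.
    by rewrite E ej0.
  + by apply/(temp_eq Ig Sg g1 Ht HainA HH Hff).
- exists (size (LL cls q)) => k k1; rewrite /T' !ff_tail //.
- exists (size (LL cls q)); split.
  + move=> k k1; rewrite /T' !ff_tail //.
  + have h : size (LL cls q) <= 2 + 2 ^ #|A|.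
      rewrite -card_powerset cardE; apply: size_LL => // j.
      by rewrite mem_enum powersetE subsetIr.
    have h2 : 2 ^ #|A|.+1 <= 2 ^ fsize phi by rewrite leq_pexp2l.
    have h3 : 0 < 2 ^ #|A| by rewrite expn_gt0.
    rewrite expnS in h2.
    lia.
Qed.
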